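(* Let $I$ be a general ring. The following are equivalent: (1) $I$ is a quasipolar general ring; (2) for every $a\in I$, the element $(0,a)$ is quasipolar in the ring $E(\mathbb{Z};I)$; (3) there exists a ring $S$ with identity such that $I$ is a unital $(S,S)$-bimodule compatible with the multiplication of $I$ (as below) and $(0,a)$ is quasipolar in $E(S;I)$ for every $a\in I$.
   Context: A general ring is an associative ring not necessarily having an identity. For $p,q\in I$, $p*q=p+q-pq$; $Q(I)=\{q\in I\mid p*q=0=q*p\text{ for some }p\in I\}$; $\mathrm{comm}(a)=\{x\mid xa=ax\}$, $\mathrm{comm}^2(a)=\{x\mid xy=yx\text{ for all }y\in\mathrm{comm}(a)\}$; $QN(I)=\{q\in I\mid qx\in Q(I)\text{ for all }x\in\mathrm{comm}(q)\}$. An element $a\in I$ is quasipolar in $I$ if there is an idempotent $p\in\mathrm{comm}^2(a)$ with $a+p\in Q(I)$ and $a-ap\in QN(I)$; $I$ is quasipolar if all its elements are. For a ring $R$ with identity, $U(R)$ is its unit group, $R^{qnil}=\{a\in R\mid 1+ax\in U(R)\text{ for all }x\in\mathrm{comm}(a)\}$, and $a\in R$ is quasipolar if there is an idempotent $p\in\mathrm{comm}^2(a)$ with $a+p\in U(R)$ and $ap\in R^{qnil}$. If $S$ is a ring with identity and $I$ is a unital $(S,S)$-bimodule such that $(vw)s=v(ws)$, $(vs)w=v(sw)$, $(sv)w=s(vw)$ for all $v,w\in I$, $s\in S$, the ideal-extension (Dorroh extension) $E(S;I)$ is the additive group $S\oplus I$ with multiplication $(s,v)(r,w)=(sr, sw+vr+vw)$;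 it is a ring with identity $(1,0)$. $E(\mathbb{Z};I)$ is the standard unitization of $I$. *)

(* Defs.v *)
From HB Require Import structures.
From mathcomp Require Import all_boot all_order all_algebra.
Set Implicit Arguments. Unset Strict Implicit. Unset Printing Implicit Defensive.
Import GRing.Theory.
Local Open Scope ring_scope.

Definition is_general_ring (V : zmodType) (mul : V -> V -> V) : Prop :=
  [/\ associative mul, left_distributive mul +%R & right_distributive mul +%R].

Section GeneralRing.
Variables (V : zmodType) (mul : V -> V -> V).

Definition circ (p q : V) : V := p + q - mul p q.
Definition inQ (q : V) : Prop := exists p, circ p q = 0 /\ circ q p = 0.
Definition in_comm (a x : V) : Prop := mul x a = mul a x.
Definition in_comm2 (a x : V) : Prop :=
  forall y, in_comm a y -> mul x y = mul y x.
Definition inQN (q : V) : Prop := forall x, in_comm q x -> inQ (mul q x).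
Definition idempotent_el (p : V) : Prop := mul p p = p.

Definition gquasipolar (a : V) : Prop :=
  exists p, [/\ idempotent_el p, in_comm2 a p, inQ (a + p) & inQN (a - mul a p)].
Definition gquasipolar_ring : Prop := forall a, gquasipolar a.

Variable one : V.
Definition is_unit (u : V) : Prop := exists v, mul u v = one /\ mul v u = one.
Definition in_qnil (a : V) : Prop := forall x, in_comm a x -> is_unit (one + mul a x).
Definition uquasipolar (a : V) : Prop :=
  exists p, [/\ idempotent_el p, in_comm2 a p, is_unit (a + p) & in_qnil (mul a p)].
End GeneralRing.

Record compat_bimodule (S : pzRingType) (V : zmodType) (mul : V -> V -> V)
    (ls : S -> V -> V) (rs : V -> S -> V) : Prop := CompatBimodule {
  ls_addr : forall s v w, ls s (v + w) = ls s v + ls s w;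
  ls_addl : forall s r v, ls (s + r) v = ls s v + ls r v;
  ls_mul : forall s r v, ls (s * r) v = ls s (ls r v);
  ls_one : forall v, ls 1 v = v;
  rs_addl : forall s v w, rs (v + w) s = rs v s + rs w s;
  rs_addr : forall s r v, rs v (s + r) = rs v s + rs v r;
  rs_mul : forall s r v, rs v (s * r) = rs (rs v s) r;
  rs_one : forall v, rs v 1 = v;
  lrs_assoc : forall s r v, rs (ls s v) r = ls s (rs v r);
  compat1 : forall s v w, rs (mul v w) s = mul v (rs w s);
  compat2 : forall s v w, mul (rs v s) w = mul v (ls s w);
  compat3 : forall s v w, mul (ls s v) w = ls s (mul v w) }.

(* Ideal-extension (Dorroh extension) E(S;I) on the carrier S * V:
   (s,v)(r,w) = (sr, sw + vr + vw), identity (1,0). *)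
Definition dorroh_mul (S : pzRingType) (V : zmodType) (mul : V -> V -> V)
    (ls : S -> V -> V) (rs : V -> S -> V) (x y : S * V) : S * V :=
  (x.1 * y.1, ls x.1 y.2 + rs x.2 y.1 + mul x.2 y.2).
Definition dorroh_one (S : pzRingType) (V : zmodType) : S * V := (1, 0).

Definition zls (V : zmodType) (z : int) (v : V) : V := v *~ z.
Definition zrs (V : zmodType) (v : V) (z : int) : V := v *~ z.

(* Main.v *)
Require Import Defs.
From HB Require Import structures.
From mathcomp Require Import all_boot all_order all_algebra.
Set Implicit Arguments. Unset Strict Implicit. Unset Printing Implicit Defensive.
Import GRing.Theory.
Local Open Scope ring_scope.

Record DData := { dS : pzRingType; dV : zmodType; dmul : dV -> dV -> dV;
  dls : dS -> dV -> dV; drs : dV -> dS -> dV;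
  dhI : is_general_ring dmul; dhB : compat_bimodule dmul dls drs }.

Definition dT (d : DData) := (dS d * dV d)%type.
HB.instance Definition _ (d : DData) := GRing.Zmodule.on (dT d).

Section Tst.
Variable d : DData.
Lemma addE (x y : dT d) : x + y = (x.1 + y.1, x.2 + y.2). Proof. by []. Qed.
Lemma oppE (x : dT d) : - x = (- x.1, - x.2). Proof. by []. Qed.
Lemma zeroE : (0 : dT d) = (0, 0). Proof. by []. Qed.
End Tst.

Section GR.
Variables (V : zmodType) (mul : V -> V -> V).
Hypothesis hI : is_general_ring mul.
Lemma gmulA : associative mul. Proof. by case: hI. Qed.
Lemma gmulDl x y z : mul (x + y) z = mul x z + mul y z. Proof. by case: hI. Qed.
Lemma gmulDr x y z : mul x (y + z) = mul x y + mul x z. Proof. by case: hI. Qed.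
Lemma gmul0r x : mul 0 x = 0.
Proof. have h := gmulDl 0 0 x; rewrite addr0 in h.
by apply: (addrI (mul 0 x)); rewrite -h addr0. Qed.
Lemma gmulr0 x : mul x 0 = 0.
Proof. have h := gmulDr x 0 0; rewrite addr0 in h.
by apply: (addrI (mul x 0)); rewrite -h addr0. Qed.
Lemma gmulNr x y : mul (- x) y = - mul x y.
Proof. by apply/eqP; rewrite -subr_eq0 opprK -gmulDl addNr gmul0r. Qed.
Lemma gmulrN x y : mul x (- y) = - mul x y.
Proof. by apply/eqP; rewrite -subr_eq0 opprK -gmulDr addNr gmulr0. Qed.
Lemma gmulrz x y (z : int) : mul x (y *~ z) = mul x y *~ z.
Proof.
have hn n : mul x (y *+ n) = mul x y *+ n.
  elim: n => [|n IH]; first by rewrite !mulr0n gmulr0.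
  by rewrite !mulrS gmulDr IH.
by case: z => n; rewrite ?NegzE ?mulrNz ?gmulrN /= hn.
Qed.
Lemma gmulzr x y (z : int) : mul (x *~ z) y = mul x y *~ z.
Proof.
have hn n : mul (x *+ n) y = mul x y *+ n.
  elim: n => [|n IH]; first by rewrite !mulr0n gmul0r.
  by rewrite !mulrS gmulDl IH.
by case: z => n; rewrite ?NegzE ?mulrNz ?gmulNr /= hn.
Qed.
End GR.

Lemma compatZ (V : zmodType) (mul : V -> V -> V) (hI : is_general_ring mul) :
  compat_bimodule mul (@zls V) (@zrs V).
Proof.
rewrite /zls /zrs; constructor => *;
  rewrite ?mulrzDl ?mulrzDr ?mulrzA ?mulr1z ?(gmulrz hI) ?(gmulzr hI) ?(gmulrz hI) //;
  by rewrite -!mulrzA mulrC.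
Qed.

Lemma AC7 (V : zmodType) (a b c x e f g : V) :
  a + b + c + x + e + f + g = a + (b + (e + (c + (f + (x + g)))))  .
Proof.
rewrite !addrA; congr (_ + _).
rewrite [RHS]addrAC; congr (_ + _).
rewrite [LHS]addrAC; congr (_ + _).
by rewrite addrAC.
Qed.

Lemma AC6 (V : zmodType) (a b c x e f : V) :
  a + b + c + x + e + f = a + c + e + b + x + f.
Proof.
congr (_ + _); rewrite [LHS]addrAC; congr (_ + _).
rewrite [RHS]addrAC; congr (_ + _); by rewrite addrAC.
Qed.

Section DorrohRing.
Variable d : DData.
Local Notation S := (dS d).
Local Notation V := (dV d).
Local Notation mul := (@dmul d).
Local Notation ls := (@dls d).
Local Notation rs := (@drs d).
Local Notation B := (@dhB d).
Local Notation hI := (@dhI d).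

Lemma ls0v v : ls 0 v = 0.
Proof. have h := ls_addl B 0 0 v; rewrite addr0 in h.
by apply: (addrI (ls 0 v)); rewrite -h addr0. Qed.
Lemma lss0 s : ls s 0 = 0.
Proof. have h := ls_addr B s 0 0; rewrite addr0 in h.
by apply: (addrI (ls s 0)); rewrite -h addr0. Qed.
Lemma rs0s s : rs 0 s = 0.
Proof. have h := rs_addl B s 0 0; rewrite addr0 in h.
by apply: (addrI (rs 0 s)); rewrite -h addr0. Qed.
Lemma rsv0 v : rs v 0 = 0.
Proof. have h := rs_addr B 0 0 v; rewrite addr0 in h.
by apply: (addrI (rs v 0)); rewrite -h addr0. Qed.

Definition dm (x y : dT d) : dT d := dorroh_mul mul ls rs x y.
Definition d1 : dT d := (1, 0).

Lemma dmA : associative dm.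
Proof.
move=> [x1 x2] [y1 y2] [z1 z2]; rewrite /dm /dorroh_mul /=; congr (_, _).
  by rewrite mulrA.
rewrite !(ls_addr B) !(rs_addl B) !(gmulDl hI) !(gmulDr hI).
rewrite (ls_mul B) (lrs_assoc B) (rs_mul B) (compat1 B) (compat3 B) (compat2 B) (gmulA hI).
rewrite !addrA; symmetry; rewrite AC7 !addrA. done.
Qed.
Lemma dm1 : left_id d1 dm.
Proof. move=> [y1 y2]; rewrite /dm /dorroh_mul /=.
by rewrite mul1r (ls_one B) rs0s (gmul0r hI) !addr0. Qed.
Lemma dm1r : right_id d1 dm.
Proof. move=> [y1 y2]; rewrite /dm /dorroh_mul /=.
by rewrite mulr1 (rs_one B) lss0 (gmulr0 hI) add0r addr0. Qed.
Lemma dmDl : left_distributive dm +%R.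
Proof.
move=> [x1 x2] [y1 y2] [z1 z2]; rewrite /dm /dorroh_mul /=; congr (_, _).
  by rewrite mulrDl.
rewrite (ls_addl B) (rs_addl B) (gmulDl hI).
by rewrite !addrA AC6.
Qed.
Lemma dmDr : right_distributive dm +%R.
Proof.
move=> [x1 x2] [y1 y2] [z1 z2]; rewrite /dm /dorroh_mul /=; congr (_, _).
  by rewrite mulrDr.
rewrite (ls_addr B) (rs_addr B) (gmulDr hI).
by rewrite !addrA AC6.
Qed.
End DorrohRing.

HB.instance Definition _ (d : DData) :=
  GRing.Zmodule_isPzRing.Build (dT d) (@dmA d) (@dm1 d) (@dm1r d) (@dmDl d) (@dmDr d).

Lemma dmulE (d : DData) (x y : dT d) : x * y = dorroh_mul (@dmul d) (@dls d) (@drs d) x y.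
Proof. by []. Qed.
Lemma doneE (d : DData) : (1 : dT d) = (1, 0).
Proof. by []. Qed.

Section RingL.
Variable R : pzRingType.
Local Notation U := (is_unit (@GRing.mul R) 1).
Local Notation qn := (in_qnil (@GRing.mul R) 1).

Lemma unitN (u : R) : U u -> U (- u).
Proof. by case=> v [h1 h2]; exists (- v); rewrite !mulrNN. Qed.
Lemma unitM (u v : R) : U u -> U v -> U (u * v).
Proof.
case=> u' [h1 h2] [v' [h3 h4]]; exists (v' * u'); split.
  by rewrite mulrA -(mulrA u) h3 mulr1.
by rewrite mulrA -(mulrA v') h2 mulr1.
Qed.
Lemma unit_commf (x y : R) : x * y = y * x -> U (x * y) -> U x.
Proof.
move=> c [w [h1 h2]]; exists (y * w); split; first by rewrite mulrA.
have hl : (w * y) * x = 1 by rewrite -mulrA -c.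
have hr : x * (y * w) = 1 by rewrite mulrA.
have e : y * w = w * y by rewrite -[y * w]mul1r -hl -!mulrA hr mulr1.
by rewrite e.
Qed.
Lemma qnN (t : R) : qn t -> qn (- t).
Proof.
move=> h x cx.
have cx' : x * t = t * x :> R.
  by apply: oppr_inj; rewrite -mulrN -mulNr; exact: cx.
have := h (- x).
have hh : in_comm *%R t (- x) by rewrite /in_comm mulrN mulNr cx'.
move=> /(_ hh); rewrite mulrN.
by rewrite mulNr.
Qed.

Lemma idem_inv (p : R) : p * p = p -> (1 - p *+ 2) * (1 - p *+ 2) = 1.
Proof.
move=> pp.
rewrite mulrBr mulr1 mulrBl mul1r mulrnAl mulrnAr pp -mulrnA.
have e4 : p *+ (2 * 2) = p *+ 2 + p *+ 2 by rewrite -mulrnDr.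
rewrite e4; move: (p *+ 2) => P.
by rewrite (opprD P P) (addrA P) subrr add0r opprK subrK.
Qed.

Lemma zid (x y z : R) : x - z = x + z - (y + z) *+ 2 - (y *+ 2 - y *+ (2 * 2)).
Proof.
have e4 : y *+ (2 * 2) = y *+ 2 + y *+ 2 by rewrite -mulrnDr.
rewrite e4 mulrnDl; move: (y *+ 2) (z *+ 2) (mulr2n z) => Y Z hZ.
rewrite (opprD Y Y) (addrA Y) subrr add0r opprK.
rewrite opprD addrA (addrAC _ (- Z)) subrK.
by rewrite hZ opprD addrA addrK.
Qed.

Lemma sign_flip (a p : R) : p * p = p -> p * a = a * p ->
  U (a + p) -> qn (a * p) -> U (a - p).
Proof.
move=> pp pa hu q.
have [w [uw wu]] : exists w : R, (a + p) * w = 1 /\ w * (a + p) = 1 := hu.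
set u := a + p in uw wu.
have up : u * p = p * u by rewrite /u mulrDl mulrDr pa pp.
have ua : u * a = a * u by rewrite /u mulrDl mulrDr pa.
have wp : w * p = p * w.
  by rewrite -[w * p]mulr1 -uw mulrA -(mulrA w) -up mulrA wu mul1r.
have wa : w * a = a * w.
  by rewrite -[w * a]mulr1 -uw mulrA -(mulrA w) -ua mulrA wu mul1r.
set t := a * p * w.
have pt : p * t = t by rewrite /t !mulrA pa -(mulrA a) pp.
have ut : u * t = a * p.
  by rewrite /t !mulrA ua -(mulrA a) up mulrA -!mulrA uw mulr1.
have hup : u * p = a * p + p by rewrite /u mulrDl pp.
have U1 : U (1 - p *+ 2).
  exists (1 - p *+ 2); split; exact: idem_inv.
have U2 : U (1 + a * p * (- (w *+ 2))).
  apply: q; rewrite /in_comm mulrN mulNr mulrnAr mulrnAl; congr (- (_ *+ 2)).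
  by rewrite mulrA wa -mulrA wp mulrA.
rewrite mulrN mulrnAr -/t in U2.
have -> : a - p = u * ((1 - p *+ 2) * (1 - t *+ 2)).
  rewrite mulrBr mulr1 mulrBl mul1r mulrnAl mulrnAr pt -mulrnA.
  rewrite !mulrBr mulr1 !mulrnAr ut hup /u.
  exact: zid.
by apply: unitM => //; apply: unitM.
Qed.

End RingL.


Lemma zneg3 (M : zmodType) (x y m : M) : x - y - m = 0 -> y - x + m = 0.
Proof. by move=> h; apply: oppr_inj; rewrite oppr0 opprD opprB. Qed.
Lemma zneg4 (M : zmodType) (x y m : M) : x + y - m = 0 -> - y - x + m = 0.
Proof. by move=> h; apply: oppr_inj; rewrite oppr0 opprD opprB opprK. Qed.

Section Trans.
Variable d : DData.
Local Notation S := (dS d).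
Local Notation V := (dV d).
Local Notation mul := (@dmul d).
Local Notation ls := (@dls d).
Local Notation rs := (@drs d).
Local Notation B := (@dhB d).
Local Notation hI := (@dhI d).
Local Notation R := (dT d).
Local Notation U := (is_unit (@GRing.mul R) 1).

Lemma idem_compl (T : pzRingType) (x : T) : (1 - x) * (1 - x) = 1 - x -> x * x = x.
Proof.
rewrite mulrBl mul1r mulrBr mulr1 => h.
have : - (x - x * x) = 0.
  by apply: (addrI (1 - x)); rewrite addr0.
by move/eqP; rewrite oppr_eq0 subr_eq0 eq_sym => /eqP.
Qed.

Definition j (v : V) : R := (0, v).

Lemma mul1 (x y : R) : (x * y).1 = x.1 * y.1. Proof. by []. Qed.
Lemma mul2 (x y : R) : (x * y).2 = ls x.1 y.2 + rs x.2 y.1 + mul x.2 y.2. Proof. by []. Qed.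
Lemma jM v w : j v * j w = j (mul v w).
Proof. by rewrite /j; congr pair; rewrite ?mul1 ?mul2 /= ?mulr0 // ls0v rsv0 !add0r. Qed.
Lemma jD v w : j (v + w) = j v + j w.
Proof. by rewrite /j; congr pair; rewrite /= addr0. Qed.
Lemma jN v : j (- v) = - j v.
Proof. by rewrite /j; congr pair; rewrite /= oppr0. Qed.
Lemma j_inj : injective j.
Proof. by move=> v w [->]. Qed.

Lemma inQ_unit q : inQ mul q <-> U (1 - j q).
Proof.
split.
  case=> p [h1 h2]; exists (1 - j p); split; congr pair; rewrite ?mul1 ?mul2 /=.
  - by rewrite subr0 mulr1.
  - rewrite !subr0 !sub0r (ls_one B) (rs_one B) (gmulNr hI) (gmulrN hI) opprK.
    exact: zneg4.
  - by rewrite subr0 mulr1.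
  - rewrite !subr0 !sub0r (ls_one B) (rs_one B) (gmulNr hI) (gmulrN hI) opprK.
    exact: zneg4.
case=> w [h1 h2].
have w1 : w.1 = 1.
  by have := congr1 fst h1; rewrite mul1 /= subr0 mul1r.
exists (- w.2); split.
- have := congr1 snd h2; rewrite mul2 /= w1 !subr0 sub0r (ls_one B) (rs_one B) (gmulrN hI).
  rewrite /circ (gmulNr hI) opprK => h.
  by have := zneg4 h; rewrite opprK.
- have := congr1 snd h1; rewrite mul2 /= w1 !subr0 sub0r (ls_one B) (rs_one B) (gmulNr hI).
  rewrite /circ (gmulrN hI) opprK => h.
  exact: zneg3.
Qed.

Lemma dir31 : (forall a : V, uquasipolar (@GRing.mul R) 1 (j a)) -> gquasipolar_ring mul.
Proof.
move=> H a; have [P [hPP hc2 hU hq]] := H a.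
have pa : P * j a = j a * P := hc2 (j a) erefl.
have [w [uw wu]] : exists w : R, (j a + P) * w = 1 /\ w * (j a + P) = 1 := hU.
have s1 : P.1 = 1.
  have e1 := congr1 fst uw; have e3 := congr1 fst hPP.
  rewrite mul1 /= add0r in e1; rewrite mul1 in e3.
  transitivity (P.1 * (P.1 * w.1)); first by rewrite e1 mulr1.
  by rewrite mulrA e3.
set e := - P.2.
have hP : P = 1 - j e.
  rewrite [LHS]surjective_pairing s1 /e /j; congr pair.
    by rewrite /= subr0.
  by rewrite /= sub0r opprK.
exists e; split.
- apply: j_inj; rewrite -jM; apply: idem_compl; rewrite -hP; exact: hPP.
- move=> y hy; apply: j_inj; rewrite -!jM.
  have := hc2 (j y); rewrite /in_comm !jM hy => /(_ erefl).
  rewrite hP mulrBl mulrBr mul1r mulr1 => /addrI /oppr_inj; rewrite !jM. done.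
- apply: (proj2 (inQ_unit _)).
  have -> : 1 - j (a + e) = - (j a - P).
    by rewrite hP jD opprB opprD addrA addrAC.
  apply: unitN; apply: sign_flip => //; exact: hq.
- move=> x hx; apply: (proj2 (inQ_unit _)).
  have hb : j a * P = j (a - mul a e) by rewrite hP mulrBr mulr1 jM -jN -jD.
  have := hq (j (- x)); rewrite hb /in_comm !jM (gmulNr hI) (gmulrN hI) hx => /(_ erefl).
  by rewrite jN.
Qed.
End Trans.

Lemma compl_idem (T : pzRingType) (x : T) : x * x = x -> (1 - x) * (1 - x) = 1 - x.
Proof. by move=> h; rewrite mulrBl mul1r mulrBr mulr1 h subrr subr0. Qed.

Lemma one_plus_minus (T : pzRingType) (t : T) : (1 + t) * (1 - t) = 1 - t * t /\ (1 + t) * (1 - t) = (1 - t) * (1 + t).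
Proof.
have e1 : (1 + t) * (1 - t) = 1 - t * t by rewrite mulrDl mul1r mulrBr mulr1 addrA subrK.
have e2 : (1 - t) * (1 + t) = 1 - t * t by rewrite mulrBl mul1r mulrDr mulr1 opprD addrA addrK.
by rewrite e1 e2.
Qed.

Section Dir12.
Variable d : DData.
Local Notation S := (dS d).
Local Notation V := (dV d).
Local Notation mul := (@dmul d).
Local Notation hI := (@dhI d).
Local Notation R := (dT d).
Local Notation U := (is_unit (@GRing.mul R) 1).
Local Notation j := (@j d).

Hypothesis dec : forall x : R, exists c v, x = c + j v /\ forall y : R, c * y = y * c.

Lemma dir12 : gquasipolar_ring mul -> forall a : V, uquasipolar (@GRing.mul R) 1 (j a).
Proof.
move=> G a; have [e [he hc2 hQ hQN]] := G a.
have pc : forall Y : R, Y * j a = j a * Y -> (1 - j e) * Y = Y * (1 - j e).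
  move=> Y; have [c [y [-> cc]]] := dec Y; move=> hY.
  have hy : mul y a = mul a y.
    by apply: j_inj; rewrite -!jM; apply: (addrI (c * j a)); rewrite -mulrDl hY mulrDr cc.
  have ey := hc2 y hy.
  by rewrite mulrBl mulrBr mul1r mulr1 mulrDl mulrDr cc jM ey -jM.
have hqn : in_qnil (@GRing.mul R) 1 (j a * (1 - j e)).
  have hb : j a * (1 - j e) = j (a - mul a e) by rewrite mulrBr mulr1 jM -jN -jD.
  rewrite hb; move=> X hX.
  set b := a - mul a e in hX *.
  set W := j b * X * X.
  have hW1 : W = j (W.2).
    rewrite [LHS]surjective_pairing; congr pair.
    by rewrite /W !mul1 /= !mul0r.
  have hwb : in_comm mul b W.2.
    apply: j_inj; rewrite /in_comm -!jM -hW1.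
    by rewrite /W -!mulrA hX (mulrA X) hX !mulrA.
  have := hQN _ hwb; move/inQ_unit; rewrite -jM -hW1 => hU.
  have [e1 e2] := one_plus_minus (j b * X).
  apply: (unit_commf e2); rewrite e1.
  suff -> : j b * X * (j b * X) = j b * W by [].
  by rewrite /W -!mulrA (mulrA X) hX !mulrA.
exists (1 - j e); split.
- by apply: compl_idem; rewrite jM he.
- exact: pc.
- have hu : U (- j a + (1 - j e)).
    by rewrite addrCA -opprD -jD; apply/inQ_unit.
  have pa : (1 - j e) * j a = j a * (1 - j e) := pc _ erefl.
  have pa' : (1 - j e) * - j a = - j a * (1 - j e) by rewrite mulrN mulNr pa.
  have qa : in_qnil (@GRing.mul R) 1 (- j a * (1 - j e)) by rewrite mulNr; exact: qnN.
  have := sign_flip (compl_idem _) pa' hu qa.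
  move=> /(_ ltac:(by rewrite jM he)) /unitN.
  by rewrite opprB opprK addrC.
- exact: hqn.
Qed.
End Dir12.


Definition dZ (V : zmodType) (mul : V -> V -> V) (hI : is_general_ring mul) : DData :=
  @Build_DData int V mul (@zls V) (@zrs V) hI (compatZ hI).

Lemma decZ (V : zmodType) (mul : V -> V -> V) (hI : is_general_ring mul) :
  forall x : dT (dZ hI), exists c v, x = c + @j (dZ hI) v /\ forall y : dT (dZ hI), c * y = y * c.
Proof.
move=> x; exists (x.1, 0), x.2; split.
  by rewrite [LHS]surjective_pairing /j; congr pair; rewrite /= ?addr0 ?add0r.
move=> y; rewrite !dmulE /dorroh_mul /=; congr pair; first exact: mulrC.
by rewrite /= /zls /zrs !mul0rz (gmul0r hI) (gmulr0 hI) !addr0 add0r.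
Qed.

Unset Implicit Arguments.
Set Strict Implicit.

Theorem proposition3p1 (V : zmodType) (mul : V -> V -> V)
  (hI : is_general_ring mul) :
  (gquasipolar_ring mul <->
     (forall a : V, uquasipolar (dorroh_mul mul (@zls V) (@zrs V))
                      (dorroh_one int V) (0, a)))
  /\
  ((forall a : V, uquasipolar (dorroh_mul mul (@zls V) (@zrs V))
                      (dorroh_one int V) (0, a)) <->
     (exists (S : pzRingType) (ls : S -> V -> V) (rs : V -> S -> V),
        compat_bimodule mul ls rs /\
        forall a : V, uquasipolar (dorroh_mul mul ls rs) (dorroh_one S V) (0, a))).
Proof.
have h12 : gquasipolar_ring mul -> forall a : V, uquasipolar (dorroh_mul mul (@zls V) (@zrs V))
                      (dorroh_one int V) (0, a).
  move=> G a; exact: (@dir12 (dZ hI) (@decZ V mul hI) G a).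
have h21 : (forall a : V, uquasipolar (dorroh_mul mul (@zls V) (@zrs V))
                      (dorroh_one int V) (0, a)) -> gquasipolar_ring mul.
  move=> H; exact: (@dir31 (dZ hI) H).
split; split => //.
  move=> H; exists int, (@zls V), (@zrs V); split => //; exact: compatZ.
case=> S [ls [rs [hB H]]]; apply: h12.
exact: (@dir31 (@Build_DData S V mul ls rs hI hB) H).
Qed.
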